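(* Let $l:\mathbb{R}\times\mathbb{R}\to\mathbb{R}$ be doubly convex (jointly convex), let $Z=(z_1,\dots,z_n)$ be any sample and $f:\mathbb{X}\to\mathbb{R}$ any model. Then for all integers $1\le k\le k'\le n$, the empirical $k$-risks satisfy $r_k(f,Z)\ge r_{k'}(f,Z)$. In particular this holds for the Kullback–Leibler loss $\mathrm{kl}(\hat y,y)=y\log\frac{y}{\hat y}+(1-y)\log\frac{1-y}{1-\hat y}$ on $(0,1)\times[0,1]$ (with $0\log 0=0$) when $f$ takes values in $(0,1)$ and labels lie in $[0,1]$.
   Context: For a finite family $S$ and function $g$, $\hat{E}_S[g(z)]=\frac{1}{|S|}\sum_{z\in S}g(z)$. For a model $f$, loss $l(\hat y,y)$ and sample $Z=(z_1,\dots,z_n)$ with $z_i=(x_i,y_i)$, the empirical $k$-risk is $r_k(f,Z)=\binom{n}{k}^{-1}\sum_{I}l(\hat{E}_{S_I}[f(x)],\hat{E}_{S_I}[y])$, summing over all $k$-element index sets $I\subset\{1,\dots,n\}$ with $S_I=(z_i)_{i\in I}$. Doubly convex means jointly convex in both arguments. *)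

(* Defs.v *)
From HB Require Import structures.
From mathcomp Require Import all_boot all_order all_algebra.
From mathcomp Require Import all_classical all_reals all_analysis.
Set Implicit Arguments. Unset Strict Implicit. Unset Printing Implicit Defensive.
Import Order.TTheory GRing.Theory Num.Theory.
Local Open Scope ring_scope.

Definition doubly_convex (R : realType) (l : R -> R -> R) : Prop :=
  forall (a1 b1 a2 b2 t : R), 0 <= t -> t <= 1 ->
    l (t * a1 + (1 - t) * a2) (t * b1 + (1 - t) * b2)
      <= t * l a1 b1 + (1 - t) * l a2 b2.

Definition emp_mean (R : realType) (n : nat) (I : {set 'I_n}) (g : 'I_n -> R) : R :=
  (#|I|%:R)^-1 * \sum_(i in I) g i.

Definition k_risk (R : realType) (X : Type) (n : nat)
    (l : R -> R -> R) (f : X -> R) (Z : 'I_n -> X * R) (k : nat) : R :=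
  ('C(n, k)%:R)^-1 *
    \sum_(I : {set 'I_n} | #|I| == k)
       l (emp_mean I (fun i => f (Z i).1)) (emp_mean I (fun i => (Z i).2)).

Definition xlogxy (R : realType) (a b : R) : R :=
  if a == 0 then 0 else a * ln (a / b).

Definition kl_loss (R : realType) (yhat y : R) : R :=
  xlogxy y yhat + xlogxy (1 - y) (1 - yhat).

(* Main.v *)
Require Import Defs.
From HB Require Import structures.
From mathcomp Require Import all_boot all_order all_algebra.
From mathcomp Require Import all_classical all_reals all_analysis.
From mathcomp Require Import ring lra.
Import Order.TTheory GRing.Theory Num.Theory.
Local Open Scope ring_scope.

Lemma ln_key (R : realType) (u v U V : R) : 0 < u -> 0 < v -> 0 < U -> 0 < V ->
  u * ln (U / V) + u - v * (U / V) <= u * ln (u / v).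
Proof.
move=> hu hv hU hV.
have pUV : U / V \in Num.pos by rewrite posrE divr_gt0.
have puv : u / v \in Num.pos by rewrite posrE divr_gt0.
have h := @le_ln1Dx R ((U / V) / (u / v) - 1).
rewrite addrCA subrr addr0 ln_div // in h.
have : -1 < U / V / (u / v) - 1.
  have : 0 < U / V / (u / v) by rewrite divr_gt0 // divr_gt0.
  lra.
move=> /h {}h.
have e : u * (U / V / (u / v) - 1) = v * (U / V) - u.
  by field; rewrite ?lt0r_neq0.
have := ler_wpM2l (ltW hu) h; rewrite e. lra.
Qed.

Lemma xlogxy_convex {R : realType} (a1 b1 a2 b2 t : R) :
  0 <= a1 -> 0 < b1 -> 0 <= a2 -> 0 < b2 -> 0 <= t -> t <= 1 ->
  xlogxy (t * a1 + (1 - t) * a2) (t * b1 + (1 - t) * b2)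
    <= t * xlogxy a1 b1 + (1 - t) * xlogxy a2 b2.
Proof.
move=> ha1 hb1 ha2 hb2 ht0 ht1.
set U := t * a1 + (1 - t) * a2; set V := t * b1 + (1 - t) * b2.
have hV : 0 < V.
  rewrite /V; have [->|tn0] := eqVneq t 0; first by rewrite mul0r add0r subr0 mul1r.
  have tp : 0 < t by rewrite lt0r tn0.
  have : 0 < t * b1 by rewrite mulr_gt0.
  have : 0 <= (1 - t) * b2 by rewrite mulr_ge0 // ?subr_ge0 // ltW.
  lra.
have hU : 0 <= U by rewrite /U addr_ge0 // mulr_ge0 // subr_ge0.
have key : forall a b : R, 0 <= a -> 0 < b -> 0 < U ->
    a * ln (U / V) + a - b * (U / V) <= xlogxy a b.
  move=> a b ha hb hU'; rewrite /xlogxy; have [->|an0] := eqVneq a 0.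
    rewrite mul0r add0r; have : 0 <= b * (U / V) by rewrite mulr_ge0 // ?ltW // divr_gt0.
    lra.
  by apply: ln_key => //; rewrite lt0r an0.
have [U0|Un0] := eqVneq U 0.
  rewrite {1}/xlogxy U0 eqxx.
  have x0 : forall a b s : R, 0 <= s -> 0 <= a -> s * a = 0 -> 0 <= s * xlogxy a b.
    move=> a b s hs ha e; have [->|sn0] := eqVneq s 0; first by rewrite mul0r.
    idtac.
    have -> : a = 0 by move/eqP: e; rewrite mulf_eq0 (negbTE sn0) => /eqP.
    by rewrite /xlogxy eqxx mulr0.
  have e1 : t * a1 = 0.
    have : 0 <= t * a1 by rewrite mulr_ge0.
    have : 0 <= (1 - t) * a2 by rewrite mulr_ge0 // subr_ge0.
    move: U0; rewrite /U; lra.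
  have e2 : (1 - t) * a2 = 0 by move: U0; rewrite /U e1 add0r.
  rewrite addr_ge0 //; apply: x0 => //; by rewrite subr_ge0.
have hU' : 0 < U by rewrite lt0r Un0.
have k1 := key a1 b1 ha1 hb1 hU'.
have k2 := key a2 b2 ha2 hb2 hU'.
have s1 := ler_wpM2l ht0 k1.
have s2' : (1 - t) * (a2 * ln (U / V) + a2 - b2 * (U / V)) <= (1 - t) * xlogxy a2 b2.
  by apply: ler_wpM2l => //; rewrite subr_ge0.
apply: le_trans (lerD s1 s2').
rewrite /xlogxy (negbTE Un0).
have -> : U * ln (U / V) = t * (a1 * ln (U / V)) + (1 - t) * (a2 * ln (U / V)) + (U - V * (U / V)).
  have -> : V * (U / V) = U by field; rewrite lt0r_neq0.
  rewrite /U; ring.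
set Q := U / V; set L := ln Q.
suff E : t * (a1 * L) + (1 - t) * (a2 * L) + (U - V * Q) = t * (a1 * L + a1 - b1 * Q) + (1 - t) * (a2 * L + a2 - b2 * Q) by rewrite E.
rewrite /U /V; ring.
Qed.

Lemma double_count (R : realType) (n k : nat) (h : {set 'I_n} -> R) :
  \sum_(J : {set 'I_n} | #|J| == k.+1) \sum_(j in J) h (J :\ j) =
  (n - k)%:R * \sum_(I : {set 'I_n} | #|I| == k) h I.
Proof.
rewrite big_distrr /=.
under [RHS]eq_bigr => I /eqP hI.
  have <- : \sum_(j in ~: I) h I = (n - k)%:R * h I.
    rewrite sumr_const mulr_natl; congr (_ *+ _).
    have := cardsC I; rewrite card_ord hI => e; by rewrite -{1}(addKn k #|~: I|) e.
  over.
rewrite !pair_big_dep /=.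
rewrite (reindex_onto (fun q : {set 'I_n} * 'I_n => (q.2 |: q.1, q.2))
                      (fun p : {set 'I_n} * 'I_n => (p.1 :\ p.2, p.2))) /=; last first.
  by case=> J j /= /andP[_ jJ]; rewrite finset.setD1K.
apply: eq_big.
  case=> I j /=; rewrite finset.in_setC; case: (boolP (j \in I)) => jI /=.
    rewrite finset.setU1r // andbF andbT; apply/negbTE; apply/negP => /andP[_ /eqP [e]].
    have : j \in (j |: I) :\ j by rewrite e.
    by rewrite !inE eqxx.
  rewrite finset.setU11 andbT finset.setU1K // eqxx andbT cardsU1 jI.
  by rewrite andbT add1n eqSS.
by case=> I j /= /andP[_ /eqP [->]].
Qed.

Definition avg {R : realType} {T : Type} (r : seq T) (h : T -> R) : R :=
  (size r)%:R^-1 * \sum_(i <- r) h i.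

Lemma avg_cons {R : realType} {T : Type} (x : T) (s : seq T) (h : T -> R) :
  s <> [::] -> avg (x :: s) h =
    ((size s).+1%:R)^-1 * h x + (1 - ((size s).+1%:R)^-1) * avg s h.
Proof.
move=> sn; rewrite /avg big_cons /=.
have m0 : (size s)%:R != 0 :> R by rewrite pnatr_eq0; case: s sn.
rewrite -[(size s).+1]addn1 natrD.
have m1 : (size s)%:R + 1 != 0 :> R.
  by rewrite -[1]/(1%:R) -natrD pnatr_eq0 addn1.
by field; rewrite m0 m1.
Qed.

Definition convex_on {R : realType} (P : R -> R -> Prop) (l : R -> R -> R) :=
  (forall a1 b1 a2 b2 t : R, 0 <= t -> t <= 1 -> P a1 b1 -> P a2 b2 ->
     P (t * a1 + (1 - t) * a2) (t * b1 + (1 - t) * b2)) /\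
  (forall a1 b1 a2 b2 t : R, 0 <= t -> t <= 1 -> P a1 b1 -> P a2 b2 ->
     l (t * a1 + (1 - t) * a2) (t * b1 + (1 - t) * b2)
       <= t * l a1 b1 + (1 - t) * l a2 b2).

Lemma jensen {R : realType} {P : R -> R -> Prop} {l : R -> R -> R}
  {T : eqType} {r : seq T} {F G : T -> R} :
  convex_on P l -> r <> [::] -> (forall i, i \in r -> P (F i) (G i)) ->
  P (avg r F) (avg r G) /\ l (avg r F) (avg r G) <= avg r (fun i => l (F i) (G i)).
Proof.
move=> [Pc Hl]; elim: r => [//|x s IH] _ HP.
case: s IH HP => [|y s] IH HP.
  rewrite /avg /= !big_seq1 invr1 !mul1r; split => //.
  by apply: HP; rewrite mem_head.
have ne : y :: s <> [::] by [].
have [IH1 IH2] := IH ne (fun i hi => HP i (mem_behead (s:=x :: y :: s) hi)).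
rewrite !(avg_cons _ _ _ ne).
set t := _^-1.
have t0 : 0 <= t by rewrite invr_ge0.
have t1 : t <= 1 by rewrite /t invf_le1 ?ltr0n // ler1n.
have Px : P (F x) (G x) by apply: HP; rewrite mem_head.
split; first exact: Pc.
apply: le_trans (Hl _ _ _ _ _ t0 t1 Px IH1) _.
rewrite lerD2l; apply: ler_wpM2l => //; by rewrite subr_ge0.
Qed.

Lemma emp_mean_avg {R : realType} {n : nat} (I : {set 'I_n}) (g : 'I_n -> R) :
  emp_mean I g = avg (enum I) g.
Proof. by rewrite /emp_mean /avg big_enum -cardE. Qed.

Lemma enum_ne0 {n : nat} {I : {set 'I_n}} : (0 < #|I|)%N -> enum I <> [::].
Proof. by rewrite cardE => h e; rewrite e in h. Qed.

Lemma mean_in {R : realType} (P : R -> R -> Prop) (l : R -> R -> R) {n : nat}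
  (F G : 'I_n -> R) (I : {set 'I_n}) :
  convex_on P l -> (forall i, P (F i) (G i)) -> (0 < #|I|)%N ->
  P (emp_mean I F) (emp_mean I G).
Proof.
move=> cv HP h; rewrite !emp_mean_avg.
by have [] := jensen cv (enum_ne0 h) (fun i _ => HP i).
Qed.

Lemma mean_split {R : realType} {n : nat} (J : {set 'I_n}) (g : 'I_n -> R) (k : nat) :
  #|J| = k.+1 -> (0 < k)%N ->
  emp_mean J g = avg (enum J) (fun j => emp_mean (J :\ j) g).
Proof.
move=> hJ k0; rewrite /avg big_enum -cardE hJ /emp_mean hJ.
have e : forall j, j \in J -> emp_mean (J :\ j) g = (k%:R)^-1 * (\sum_(i in J) g i - g j).
  move=> j jJ; rewrite /emp_mean.
  have := cardsD1 j J; rewrite jJ hJ add1n => [[<-]].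
  by rewrite (big_setD1 j jJ) /= addrC addrK.
rewrite (eq_bigr _ e) -big_distrr /= sumrB sumr_const hJ -mulr_natl.
have k0' : k%:R != 0 :> R by rewrite pnatr_eq0 -lt0n.
have k1 : k.+1%:R != 0 :> R by rewrite pnatr_eq0.
rewrite -[k.+1]addn1 natrD in k1 *.
by field; rewrite k0' k1.
Qed.

Lemma step {R : realType} {n : nat} (P : R -> R -> Prop) (l : R -> R -> R)
  (F G : 'I_n -> R) (k : nat) :
  convex_on P l -> (forall i, P (F i) (G i)) -> (0 < k)%N -> (k < n)%N ->
  ('C(n, k.+1)%:R)^-1 *
    \sum_(J : {set 'I_n} | #|J| == k.+1) l (emp_mean J F) (emp_mean J G)
  <= ('C(n, k)%:R)^-1 *
    \sum_(I : {set 'I_n} | #|I| == k) l (emp_mean I F) (emp_mean I G).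
Proof.
move=> cv HP k0 kn.
set LJ := fun J : {set 'I_n} => l (emp_mean J F) (emp_mean J G).
have loc : forall J : {set 'I_n}, #|J| == k.+1 ->
    LJ J <= (k.+1%:R)^-1 * \sum_(j in J) LJ (J :\ j).
  move=> J /eqP hJ; rewrite /LJ (mean_split _ F _ hJ k0) (mean_split _ G _ hJ k0).
  have ne : enum J <> [::] by apply: enum_ne0; rewrite hJ.
  have hP : forall j, j \in enum J -> P (emp_mean (J :\ j) F) (emp_mean (J :\ j) G).
    move=> j; rewrite mem_enum => jJ; apply: mean_in cv HP _.
    by have := cardsD1 j J; rewrite jJ hJ add1n => [[<-]].
  have [_ h] := jensen (F := fun j => emp_mean (J :\ j) F) (G := fun j => emp_mean (J :\ j) G) cv ne hP.
  apply: (le_trans h); rewrite /avg big_enum -cardE hJ.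
  by [].
have S : \sum_(J : {set 'I_n} | #|J| == k.+1) LJ J <=
    (k.+1%:R)^-1 * ((n - k)%:R * \sum_(I : {set 'I_n} | #|I| == k) LJ I).
  rewrite -double_count big_distrr /=; exact: ler_sum.
have Cpos : (0 < 'C(n, k.+1))%N by rewrite bin_gt0.
have Cpos' : (0 < 'C(n, k))%N by rewrite bin_gt0 ltnW.
apply: le_trans (ler_wpM2l _ S) _; first by rewrite invr_ge0.
have e : (k.+1%:R * 'C(n, k.+1)%:R : R) = (n - k)%:R * 'C(n, k)%:R.
  by rewrite -!natrM mul_bin_left.
have c1 : 'C(n, k.+1)%:R != 0 :> R by rewrite pnatr_eq0 -lt0n.
have c2 : 'C(n, k)%:R != 0 :> R by rewrite pnatr_eq0 -lt0n.
have c3 : k.+1%:R != 0 :> R by rewrite pnatr_eq0.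
have c4 : (n - k)%:R != 0 :> R by rewrite pnatr_eq0 -lt0n subn_gt0.
have E : 'C(n, k.+1)%:R^-1 * (k.+1%:R^-1 * (n - k)%:R) = ('C(n, k)%:R)^-1 :> R.
  have -> : (n - k)%:R = k.+1%:R * 'C(n, k.+1)%:R / 'C(n, k)%:R :> R.
    by rewrite e; field.
  by field; rewrite c1 c2 -[1]/(1%:R) -natrD pnatr_eq0.
by rewrite mulrA mulrA -(mulrA _ _ (n - k)%:R) E.
Qed.

Lemma mono {R : realType} {X : Type} {n : nat} (Z : 'I_n -> X * R) (f : X -> R)
  (P : R -> R -> Prop) (l : R -> R -> R) :
  convex_on P l -> (forall i, P (f (Z i).1) (Z i).2) ->
  forall k k' : nat, (1 <= k)%N -> (k <= k')%N -> (k' <= n)%N ->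
    k_risk l f Z k' <= k_risk l f Z k.
Proof.
move=> cv HP k k' k1; elim: k' => [|m IH] hk hm.
  by move: k1; rewrite leqn0 in hk; rewrite (eqP hk).
move: hk; rewrite leq_eqVlt => /orP[/eqP->//|hk].
have hkm : (k <= m)%N by [].
apply: le_trans (IH hkm (ltnW hm)).
rewrite /k_risk; apply: (step _ _ (fun i => f (Z i).1) (fun i => (Z i).2) m cv HP) => //.
exact: leq_trans k1 hkm.
Qed.

Lemma kl_convex (R : realType) :
  convex_on (fun a b : R => 0 < a < 1 /\ 0 <= b <= 1) (@kl_loss R).
Proof.
split.
  move=> a1 b1 a2 b2 t t0 t1 [/andP[ha1 ha1'] /andP[hb1 hb1']] [/andP[ha2 ha2'] /andP[hb2 hb2']].
  have cvx : forall x y : R, t * x + (1 - t) * y - y = t * (x - y) by move=> x y; ring.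
  have m1 := cvx a1 a2; have m2 := cvx b1 b2.
  have lo : forall x y c : R, c < x -> c < y -> c < t * x + (1 - t) * y.
    move=> x y c hx hy; have : 0 <= t * (x - c) by rewrite mulr_ge0 // subr_ge0 ltW.
    have : 0 < (1 - t) * (y - c) \/ t = 1.
      have [->|tn1] := eqVneq t 1; first by right.
      by left; rewrite mulr_gt0 // subr_gt0 // lt_neqAle tn1 t1.
    case=> [h|->] h'; last by rewrite subrr mul0r addr0 mul1r.
    have e : t * x + (1 - t) * y - c = t * (x - c) + (1 - t) * (y - c) by ring.
    lra.
  have le : forall x y c : R, c <= x -> c <= y -> c <= t * x + (1 - t) * y.
    move=> x y c hx hy; have : 0 <= t * (x - c) by rewrite mulr_ge0 // subr_ge0.
    have : 0 <= (1 - t) * (y - c) by rewrite mulr_ge0 // subr_ge0.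
    have e : t * x + (1 - t) * y - c = t * (x - c) + (1 - t) * (y - c) by ring.
    lra.
  have up : forall x y c : R, x < c -> y < c -> t * x + (1 - t) * y < c.
    move=> x y c hx hy; have := lo (- x) (- y) (- c).
    rewrite !ltrN2 => /(_ hx hy); have e : t * - x + (1 - t) * - y = - (t * x + (1 - t) * y) by ring.
    by rewrite e ltrN2.
  have ue : forall x y c : R, x <= c -> y <= c -> t * x + (1 - t) * y <= c.
    move=> x y c hx hy; have := le (- x) (- y) (- c).
    rewrite !lerN2 => /(_ hx hy); have e : t * - x + (1 - t) * - y = - (t * x + (1 - t) * y) by ring.
    by rewrite e lerN2.
  split; apply/andP; split; [exact: lo|exact: up|exact: le|exact: ue].
move=> a1 b1 a2 b2 t t0 t1 [/andP[ha1 ha1'] /andP[hb1 hb1']] [/andP[ha2 ha2'] /andP[hb2 hb2']].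
rewrite /kl_loss.
have -> : 1 - (t * b1 + (1 - t) * b2) = t * (1 - b1) + (1 - t) * (1 - b2) by ring.
have -> : 1 - (t * a1 + (1 - t) * a2) = t * (1 - a1) + (1 - t) * (1 - a2) by ring.
have h1 := xlogxy_convex _ _ _ _ _ hb1 ha1 hb2 ha2 t0 t1.
have h2 := @xlogxy_convex R (1 - b1) (1 - a1) (1 - b2) (1 - a2) t.
have : 0 <= 1 - b1 by lra. have : 0 < 1 - a1 by lra.
have : 0 <= 1 - b2 by lra. have : 0 < 1 - a2 by lra.
move=> q1 q2 q3 q4; have {}h2 := h2 q4 q3 q2 q1 t0 t1.
lra.
Qed.

Theorem mainTheorem6 (R : realType) (X : Type) (n : nat)
    (Z : 'I_n -> X * R) (f : X -> R) :
  (forall l : R -> R -> R, doubly_convex l ->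
     forall k k' : nat, (1 <= k)%N -> (k <= k')%N -> (k' <= n)%N ->
       k_risk l f Z k' <= k_risk l f Z k)
  /\
  ((forall x : X, 0 < f x < 1) -> (forall i : 'I_n, 0 <= (Z i).2 <= 1) ->
     forall k k' : nat, (1 <= k)%N -> (k <= k')%N -> (k' <= n)%N ->
       k_risk (@kl_loss R) f Z k' <= k_risk (@kl_loss R) f Z k).
Proof.
split.
  move=> l dc; apply: (mono Z f (fun _ _ => True) l) => //.
  by split => // a1 b1 a2 b2 t t0 t1 _ _; apply: dc.
move=> hf hZ; apply: (mono Z f _ _ (kl_convex R)) => i; split; [exact: hf | exact: hZ].
Qed.
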